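(* Let $g\in C^{\omega}(\mathbb{R})$ satisfy: $g(v)>0$, $g'(v)\ge0$ and $\frac{d^2}{dv^2}(v^2g(v^2))>0$ for all $v>0$, and $\lim_{v\to\infty}v\,g(v^2)=\infty$. Then the set of all $\beta>0$ for which the toy model has a toy steady tip growth solution is a closed subset of $\mathbb{R}_{>0}$ with empty interior.
   Context: Toy model: for a real-analytic $g:\mathbb{R}\to\mathbb{R}$ with $g(v)>0$ for $v>0$ and a parameter $\beta$, the toy model is the planar ODE (prime denotes $d/ds$) $$\rho'=\frac32\,\frac{1-\rho^2}{r}\left(-1+\frac{\sqrt{1-\rho^2}\,\big(\beta r^2 g(r^2)+\rho\big)}{r}\right),\qquad r'=\rho,$$ on $M_0=(-1,1)\times\mathbb{R}_{>0}$. For a solution $(\rho,r)$ defined on an interval $(0,s_{\max})$: (S1) $\lim_{s\to0^+}\rho=1$, $\lim_{s\to0^+}r=0$, $\lim_{s\to0^+}\sqrt{1-\rho^2}/r=\eta_0>0$; (S2) there exist $s_0>0$ and real-analytic $G:(-a,a)\to\mathbb{R}_{>0}$, $a=r(s_0)^2$, with $\rho(s)=G(r(s)^2)$ for $s\in(0,s_0)$; (S3) the solution is defined on $(0,\infty)$ with $\rho'(s)<0$, $\rho(s)>0$ for all $s>0$; (S4) $\lim_{s\to\infty}\rho=0$, $\lim_{s\to\infty}r=r_\infty>0$. A toy steady tip growth solution is a solution satisfying (S1)–(S4). *)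

(* Defs.v *)
From Stdlib Require Import Reals Lra.
Open Scope R_scope.

Definition analytic_on (lo hi : R) (f : R -> R) : Prop :=
  forall x0, lo < x0 < hi ->
    exists rad, 0 < rad /\ exists c : nat -> R,
      forall x, Rabs (x - x0) < rad -> lo < x < hi ->
        infinite_sum (fun n => c n * (x - x0) ^ n) (f x).

Definition analytic (f : R -> R) : Prop :=
  forall x0, exists rad, 0 < rad /\ exists c : nat -> R,
    forall x, Rabs (x - x0) < rad ->
      infinite_sum (fun n => c n * (x - x0) ^ n) (f x).

Definition lim_0plus (f : R -> R) (l : R) : Prop :=
  forall eps, 0 < eps -> exists d, 0 < d /\
    forall s, 0 < s < d -> Rabs (f s - l) < eps.

Definition lim_infty (f : R -> R) (l : R) : Prop :=
  forall eps, 0 < eps -> exists S, forall s, S < s -> Rabs (f s - l) < eps.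

Definition lim_infty_infty (f : R -> R) : Prop :=
  forall M, exists V, forall v, V < v -> M < f v.

Definition toy_rhs (g : R -> R) (beta rho r : R) : R :=
  3 / 2 * ((1 - rho ^ 2) / r) *
  (-1 + sqrt (1 - rho ^ 2) * (beta * r ^ 2 * g (r ^ 2) + rho) / r).

Definition toy_solution_pos (g : R -> R) (beta : R) (rho r : R -> R) : Prop :=
  forall s, 0 < s ->
    -1 < rho s < 1 /\ 0 < r s /\
    derivable_pt_lim rho s (toy_rhs g beta (rho s) (r s)) /\
    derivable_pt_lim r s (rho s).

(* Toy steady tip growth solution: (S1)-(S4); (S3) includes existence on (0,oo). *)
Definition toy_steady_tip (g : R -> R) (beta : R) (rho r : R -> R) : Prop :=
  toy_solution_pos g beta rho r /\
  (lim_0plus rho 1 /\ lim_0plus r 0 /\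
   exists eta0, 0 < eta0 /\ lim_0plus (fun s => sqrt (1 - rho s ^ 2) / r s) eta0) /\
  (exists s0, 0 < s0 /\ exists G : R -> R,
     analytic_on (- (r s0 ^ 2)) (r s0 ^ 2) G /\
     (forall x, - (r s0 ^ 2) < x < r s0 ^ 2 -> 0 < G x) /\
     (forall s, 0 < s < s0 -> rho s = G (r s ^ 2))) /\
  (forall s, 0 < s -> 0 < rho s /\ exists l, derivable_pt_lim rho s l /\ l < 0) /\
  (lim_infty rho 0 /\ exists rinf, 0 < rinf /\ lim_infty r rinf).

Definition has_toy_steady (g : R -> R) (beta : R) : Prop :=
  exists rho r : R -> R, toy_steady_tip g beta rho r.

(* Main.v *)
Require Import Defs.
From Stdlib Require Import Reals Lra Psatz ClassicalEpsilon Classical Ranalysis5.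
From Coquelicot Require Import Coquelicot.
Open Scope R_scope.


Lemma lim_plus {T} {F : (T -> Prop) -> Prop} {FF : Filter F} (f g : T -> R) a b :
  filterlim f F (locally a) -> filterlim g F (locally b) ->
  filterlim (fun x => f x + g x) F (locally (a + b)).
Proof.
  intros Hf Hg. eapply filterlim_comp_2; [exact Hf| exact Hg|].
  apply (@filterlim_plus R_AbsRing R_NormedModule a b).
Qed.

Lemma lim_mult {T} {F : (T -> Prop) -> Prop} {FF : Filter F} (f g : T -> R) a b :
  filterlim f F (locally a) -> filterlim g F (locally b) ->
  filterlim (fun x => f x * g x) F (locally (a * b)).
Proof.
  intros Hf Hg. eapply filterlim_comp_2; [exact Hf| exact Hg|].
  apply (filterlim_Rbar_mult (Finite a) (Finite b) (Finite (a*b))).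
  reflexivity.
Qed.

Lemma lim_cont {T} {F : (T -> Prop) -> Prop} {FF : Filter F} (f : T -> R) (h : R -> R) a :
  continuity_pt h a -> filterlim f F (locally a) ->
  filterlim (fun x => h (f x)) F (locally (h a)).
Proof.
  intros Hh Hf. eapply filterlim_comp; [exact Hf|].
  now apply continuity_pt_filterlim.
Qed.

Lemma lim_const {T} {F : (T -> Prop) -> Prop} {FF : Filter F} (a : R) :
  filterlim (fun _ : T => a) F (locally a).
Proof. apply filterlim_const. Qed.

Lemma ball_R (x y e : R) : ball x e y <-> Rabs (y - x) < e.
Proof. reflexivity. Qed.

Lemma lim0_iff f l : lim_0plus f l <-> filterlim f (at_right 0) (locally l).
Proof.
  rewrite filterlim_locally. split.
  - intros H eps. destruct (H eps (cond_pos eps)) as [d [Hd Hs]].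
    exists (mkposreal d Hd). intros y Hy Hy0. apply Hs. split; auto.
    unfold ball in Hy; simpl in Hy; unfold AbsRing_ball, abs, minus, plus, opp in Hy; simpl in Hy.
    apply Rabs_def2 in Hy. lra.
  - intros H eps Heps. destruct (H (mkposreal eps Heps)) as [d Hd].
    exists d. split; [apply cond_pos|]. intros s Hs. apply (Hd s).
    + unfold ball; simpl; unfold AbsRing_ball, abs, minus, plus, opp; simpl.
      rewrite Rabs_right; lra.
    + lra.
Qed.

Lemma limI_iff f l : lim_infty f l <-> filterlim f (Rbar_locally p_infty) (locally l).
Proof.
  rewrite filterlim_locally. split.
  - intros H eps. destruct (H eps (cond_pos eps)) as [S HS]. exists S. intros; now apply HS.
  - intros H eps Heps. destruct (H (mkposreal eps Heps)) as [S HS]. exists S. intros; now apply HS.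
Qed.

Lemma lim_eq {T} {F : (T -> Prop) -> Prop} (f : T -> R) a b :
  filterlim f F (locally a) -> a = b -> filterlim f F (locally b).
Proof. intros H <-; exact H. Qed.

Lemma lim_inv {T} {F : (T -> Prop) -> Prop} {FF : Filter F} (f : T -> R) a :
  filterlim f F (locally a) -> a <> 0 -> filterlim (fun x => / f x) F (locally (/ a)).
Proof.
  intros Hf Ha. eapply filterlim_comp; [exact Hf|].
  apply (filterlim_Rbar_inv (Finite a)). intro E; apply Ha. now injection E.
Qed.

Lemma lim_sqrt {T} {F : (T -> Prop) -> Prop} {FF : Filter F} (f : T -> R) a :
  filterlim f F (locally a) -> 0 <= a -> filterlim (fun x => sqrt (f x)) F (locally (sqrt a)).
Proof. intros Hf Ha. apply lim_cont; auto. now apply continuity_pt_sqrt. Qed.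

Lemma lim_pow {T} {F : (T -> Prop) -> Prop} {FF : Filter F} (f : T -> R) a n :
  filterlim f F (locally a) -> filterlim (fun x => f x ^ n) F (locally (a ^ n)).
Proof.
  intros Hf. induction n as [|n IH]; simpl.
  - apply lim_const.
  - now apply lim_mult.
Qed.



Lemma lim_minus {T} {F : (T -> Prop) -> Prop} {FF : Filter F} (f g : T -> R) a b :
  filterlim f F (locally a) -> filterlim g F (locally b) ->
  filterlim (fun x => f x - g x) F (locally (a - b)).
Proof.
  intros Hf Hg. unfold Rminus. apply lim_plus; auto.
  assert (H := lim_mult (fun _ => -1) g (-1) b (lim_const _) Hg).
  replace (- b) with (-1 * b) by ring.
  eapply filterlim_ext; [|exact H]. intro; simpl; ring.
Qed.

Lemma lim_div {T} {F : (T -> Prop) -> Prop} {FF : Filter F} (f g : T -> R) a b :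
  filterlim f F (locally a) -> filterlim g F (locally b) -> b <> 0 ->
  filterlim (fun x => f x / g x) F (locally (a / b)).
Proof. intros; unfold Rdiv; apply lim_mult; auto; now apply lim_inv. Qed.

Ltac lstep := first
  [ assumption
  | apply lim_const
  | apply lim_minus
  | apply lim_plus
  | apply lim_div
  | apply lim_mult
  | apply lim_pow
  | apply lim_sqrt
  | apply lim_inv ].

Lemma lim_squeeze0 {T} {F : (T -> Prop) -> Prop} {FF : Filter F} (f h : T -> R) :
  F (fun x => Rabs (f x) <= h x) -> filterlim h F (locally 0) -> filterlim f F (locally 0).
Proof.
  intros Hb Hh. rewrite filterlim_locally in *. intro eps.
  generalize (filter_and _ _ Hb (Hh eps)). apply filter_imp. intros x [H1 H2].
  rewrite ball_R in *. rewrite Rminus_0_r in *.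
  assert (Rabs (h x) < eps) by exact H2. apply Rabs_def2 in H. lra.
Qed.


Lemma ts_basic g b rho r : toy_steady_tip g b rho r -> forall s, 0 < s ->
  0 < rho s /\ rho s < 1 /\ 0 < r s /\
  derivable_pt_lim rho s (toy_rhs g b (rho s) (r s)) /\
  derivable_pt_lim r s (rho s) /\ toy_rhs g b (rho s) (r s) < 0.
Proof.
  intros [Hs [_ [_ [H3 _]]]] s Hs0.
  destruct (Hs s Hs0) as [[_ H1] [H2 [H4 H5]]].
  destruct (H3 s Hs0) as [H6 [l [Hl Hl0]]].
  rewrite (uniqueness_limite _ _ _ _ H4 Hl). repeat split; auto.
Qed.

Lemma ts_r_incr g b rho r : toy_steady_tip g b rho r -> forall s t, 0 < s < t -> r s < r t.
Proof.
  intros H s t Hst.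
  destruct (MVT_cor2 r rho s t) as [c [Hc1 Hc2]]; [lra| |].
  - intros c Hc. apply (ts_basic _ _ _ _ H c). lra.
  - destruct (ts_basic _ _ _ _ H c) as [Hp _]; [lra|]. nra.
Qed.

Lemma ts_rho_decr g b rho r : toy_steady_tip g b rho r -> forall s t, 0 < s < t -> rho t < rho s.
Proof.
  intros H s t Hst.
  destruct (MVT_cor2 rho (fun c => toy_rhs g b (rho c) (r c)) s t) as [c [Hc1 Hc2]]; [lra| |].
  - intros c Hc. apply (ts_basic _ _ _ _ H c). lra.
  - destruct (ts_basic _ _ _ _ H c) as [_ [_ [_ [_ [_ Hp]]]]]; [lra|]. nra.
Qed.

Lemma ts_R g b rho r : toy_steady_tip g b rho r ->
  exists R, 0 < R /\ lim_infty r R /\ forall s, 0 < s -> r s < R.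
Proof.
  intros H. pose proof H as Hts. unfold toy_steady_tip in H. destruct H as [H0 [H1 [H2 [H3 [H4 [R [HR HRl]]]]]]].
  exists R; repeat split; auto. intros s Hs.
  destruct (Rlt_or_le (r s) R) as [|Hle]; auto. exfalso.
  assert (Hi := ts_r_incr _ _ _ _ Hts s (s+1) ltac:(lra)).
  destruct (HRl (r (s+1) - R) ltac:(lra)) as [S HS].
  set (t := Rmax S (s+1) + 1).
  assert (Ht1 : S < t) by (unfold t; generalize (Rmax_l S (s+1)); lra).
  assert (Ht2 : s + 1 < t) by (unfold t; generalize (Rmax_r S (s+1)); lra).
  specialize (HS t Ht1). assert (Hi2 := ts_r_incr _ _ _ _ Hts (s+1) t ltac:(lra)).
  apply Rabs_def2 in HS. lra.
Qed.

Lemma ts_r_le g b rho r : toy_steady_tip g b rho r -> forall s, 0 < s -> r s <= s.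
Proof.
  intros H s Hs. destruct (Rle_or_lt (r s) s) as [|Hlt]; auto. exfalso.
  pose proof H as Hts. unfold toy_steady_tip in H. destruct H as [H0 [[H1a [H1b H1c]] H2]].
  destruct (H1b (r s - s) ltac:(lra)) as [d [Hd Hds]].
  set (t := Rmin d s / 2).
  assert (Ht : 0 < t < s) by (unfold t; generalize (Rmin_r d s) (Rmin_glb_lt d s 0); unfold Rmin; destruct Rle_dec; lra).
  assert (Ht' : t < d) by (unfold t; generalize (Rmin_l d s); unfold Rmin; destruct Rle_dec; lra).
  specialize (Hds t (conj (proj1 Ht) Ht')). rewrite Rminus_0_r in Hds. apply Rabs_def2 in Hds.
  destruct (MVT_cor2 r rho t s) as [c [Hc1 Hc2]]; [lra| |].
  - intros c Hc. apply (ts_basic _ _ _ _ Hts c). lra.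
  - destruct (ts_basic _ _ _ _ Hts c) as [_ [Hp _]]; [lra|]. nra.
Qed.

Lemma g_deriv (g : R -> R)
  (Hg_mono : forall v, 0 < v -> exists l, derivable_pt_lim g v l /\ 0 <= l) :
  forall v, 0 < v -> derivable_pt_lim g v (Derive g v) /\ 0 <= Derive g v.
Proof.
  intros v Hv. destruct (Hg_mono v Hv) as [l [Hl Hl0]].
  assert (E : Derive g v = l) by (apply is_derive_unique; now apply is_derive_Reals).
  rewrite E; auto.
Qed.

Lemma g_cont (g : R -> R)
  (Hg_mono : forall v, 0 < v -> exists l, derivable_pt_lim g v l /\ 0 <= l) :
  forall v, 0 < v -> continuity_pt g v.
Proof.
  intros v Hv. apply derivable_continuous_pt. exists (Derive g v).
  apply (g_deriv g Hg_mono v Hv).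
Qed.

Lemma g_mon (g : R -> R)
  (Hg_mono : forall v, 0 < v -> exists l, derivable_pt_lim g v l /\ 0 <= l) :
  forall u v, 0 < u <= v -> g u <= g v.
Proof.
  intros u v [Hu Huv]. destruct Huv as [Huv| <-]; [|lra].
  destruct (MVT_cor2 g (Derive g) u v) as [c [Hc1 Hc2]]; [lra| |].
  - intros c Hc. apply g_deriv; auto; lra.
  - destruct (g_deriv g Hg_mono c) as [_ Hd]; [lra|]. nra.
Qed.

Lemma wg_strict (g : R -> R)
  (Hg_pos : forall v, 0 < v -> 0 < g v)
  (Hg_mono : forall v, 0 < v -> exists l, derivable_pt_lim g v l /\ 0 <= l) :
  forall u v, 0 < u < v -> u * g (u^2) < v * g (v^2).
Proof.
  intros u v Huv. assert (H1 := g_mon g Hg_mono (u^2) (v^2) ltac:(split; nra)).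
  assert (H2 := Hg_pos (u^2) ltac:(nra)). nra.
Qed.

Lemma ts_equil g b rho r
  (Hg_mono : forall v, 0 < v -> exists l, derivable_pt_lim g v l /\ 0 <= l) :
  toy_steady_tip g b rho r -> forall R, 0 < R -> lim_infty r R -> b * R * g (R^2) = 1.
Proof.
  intros H R HR HRl. pose proof H as Hts.
  destruct H as [_ [_ [_ [_ [Hrho0 _]]]]].
  rewrite limI_iff in Hrho0, HRl.
  assert (Hgl : filterlim (fun s => g (r s ^ 2)) (Rbar_locally p_infty) (locally (g (R^2)))).
  { apply lim_cont. apply g_cont; auto. nra. now apply lim_pow. }
  assert (Hl : filterlim (fun s => toy_rhs g b (rho s) (r s)) (Rbar_locally p_infty)
     (locally (3/2 * ((1 - 0^2)/R) * (-1 + sqrt (1 - 0^2) * (b * R^2 * g (R^2) + 0) / R)))).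
  { unfold toy_rhs. repeat lstep; try lra. }
  set (L := 3/2 * ((1 - 0^2)/R) * (-1 + sqrt (1 - 0^2) * (b * R^2 * g (R^2) + 0) / R)) in Hl.
  assert (HL : L = 3/2 / R * (-1 + b * R * g (R^2))).
  { unfold L. rewrite pow_i by lia. rewrite Rminus_0_r, sqrt_1. field. lra. }
  destruct (Req_dec L 0) as [HL0|HL0].
  - rewrite HL0 in HL. assert (Hi : / R <> 0) by (apply Rinv_neq_0_compat; lra).
    assert (-1 + b * R * g (R^2) = 0); [|lra].
    apply (Rmult_eq_reg_l (3/2 / R)); [rewrite <- HL; ring|]. unfold Rdiv.
    apply Rmult_integral_contrapositive; split; lra || auto.
  - exfalso. rewrite filterlim_locally in Hl, Hrho0.
    assert (Ha : 0 < Rabs L / 2) by (generalize (Rabs_pos_lt L HL0); lra).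
    destruct (Hl (mkposreal _ Ha)) as [S1 HS1].
    assert (Hb : 0 < Rabs L / 8) by lra.
    destruct (Hrho0 (mkposreal _ Hb)) as [S2 HS2].
    set (t := Rmax 1 (Rmax S1 S2) + 1).
    assert (Ht : 1 < t /\ S1 < t /\ S2 < t) by (unfold t; generalize (Rmax_l 1 (Rmax S1 S2)) (Rmax_r 1 (Rmax S1 S2)) (Rmax_l S1 S2) (Rmax_r S1 S2); lra).
    destruct (MVT_cor2 rho (fun c => toy_rhs g b (rho c) (r c)) t (t+1)) as [c [Hc1 Hc2]]; [lra| |].
    + intros c Hc. apply (ts_basic _ _ _ _ Hts c). lra.
    + assert (Hc := HS1 c ltac:(lra)). assert (Ha1 := HS2 t ltac:(lra)). assert (Ha2 := HS2 (t+1) ltac:(lra)).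
      rewrite ball_R in Hc, Ha1, Ha2. simpl in Hc, Ha1, Ha2.
      replace (t + 1 - t) with 1 in Hc2 by ring. 
      apply Rabs_def2 in Ha1. apply Rabs_def2 in Ha2. apply Rabs_def2 in Hc.
      unfold Rabs in *. destruct (Rcase_abs L); simpl in *; lra.
Qed.


Definition Yh (rho r : R -> R) s := sqrt (1 - rho s ^ 2) / r s.

Lemma ts_Yh_deriv g b rho r : toy_steady_tip g b rho r -> forall s, 0 < s ->
  derivable_pt_lim (Yh rho r) s
    (rho s * Yh rho r s * (1/2 - 3/2 * Yh rho r s * (b * r s ^ 2 * g (r s ^ 2) + rho s)) / r s).
Proof.
  intros H s Hs. destruct (ts_basic _ _ _ _ H s Hs) as [H1 [H2 [H3 [H4 [H5 _]]]]].
  apply is_derive_Reals. rewrite <- is_derive_Reals in H4, H5. unfold Yh.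
  auto_derive.
  - repeat split; try (eexists; eassumption). nra. lra.
  - replace (Derive (fun x => rho x) s) with (toy_rhs g b (rho s) (r s))
      by (symmetry; apply is_derive_unique; exact H4).
    replace (Derive (fun x => r x) s) with (rho s)
      by (symmetry; apply is_derive_unique; exact H5).
    replace (1 + - (rho s * (rho s * 1))) with (1 - rho s ^ 2) by ring.
    unfold toy_rhs.
    assert (Hq : 0 < 1 - rho s ^ 2) by nra.
    assert (Hw := sqrt_sqrt _ (Rlt_le _ _ Hq)). assert (Hw0 := sqrt_lt_R0 _ Hq).
    set (w := sqrt (1 - rho s ^ 2)) in *. rewrite <- Hw. field. lra.
Qed.

Definition Eh g b (rho r : R -> R) s :=
  rho s * Yh rho r s * (1/2 - 3/2 * Yh rho r s * (b * r s ^ 2 * g (r s ^ 2) + rho s)).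

Lemma ts_r2g_lim g b rho r
  (Hg_pos : forall v, 0 < v -> 0 < g v)
  (Hg_mono : forall v, 0 < v -> exists l, derivable_pt_lim g v l /\ 0 <= l) :
  toy_steady_tip g b rho r -> lim_0plus (fun s => b * r s ^ 2 * g (r s ^ 2)) 0.
Proof.
  intros H. pose proof H as Hts. destruct H as [_ [[_ [Hr0 _]] _]].
  intros eps Heps.
  assert (Hg1 := Hg_pos 1 ltac:(lra)).
  set (K := (Rabs b + 1) * (g 1 + 1)).
  assert (HK : 0 < K) by (unfold K; generalize (Rabs_pos b); nra).
  destruct (Hr0 (Rmin 1 (eps / K)) ltac:(apply Rmin_glb_lt; [lra| apply Rdiv_lt_0_compat; lra]))
    as [d [Hd Hds]].
  exists d; split; auto. intros s Hs. specialize (Hds s Hs).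
  rewrite Rminus_0_r in *. destruct (ts_basic _ _ _ _ Hts s ltac:(lra)) as [_ [_ [Hr _]]].
  rewrite Rabs_right in Hds by lra.
  assert (Hm1 := Rmin_l 1 (eps / K)). assert (Hm2 := Rmin_r 1 (eps / K)).
  assert (Hr1 : r s < 1) by lra. assert (Hr2 : 0 < r s ^ 2 <= 1) by (simpl; split; nra).
  assert (Hgr := g_mon g Hg_mono (r s ^ 2) 1 Hr2).
  assert (Hgp := Hg_pos (r s ^ 2) (proj1 Hr2)).
  assert (Hrk : r s * K < eps).
  { apply (Rlt_le_trans _ (eps / K * K)). apply Rmult_lt_compat_r; lra.
    right; field; lra. }
  rewrite Rabs_mult, Rabs_mult, (Rabs_right (r s ^ 2)), (Rabs_right (g _)) by nra.
  assert (Hb := Rabs_pos b). unfold K in Hrk.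
  assert (r s ^ 2 <= r s) by nra.
  assert (Rabs b * r s ^ 2 * g (r s ^ 2) <= Rabs b * r s * g 1).
  { apply Rle_trans with (Rabs b * r s ^2 * g 1). apply Rmult_le_compat_l; [apply Rmult_le_pos; nra | lra].
    apply Rmult_le_compat_r; [lra|]. apply Rmult_le_compat_l; lra. }
  nra.
Qed.

Lemma ts_Yh_lim g b rho r
  (Hg_pos : forall v, 0 < v -> 0 < g v)
  (Hg_mono : forall v, 0 < v -> exists l, derivable_pt_lim g v l /\ 0 <= l) :
  toy_steady_tip g b rho r -> lim_0plus (Yh rho r) (1/3).
Proof.
  intros H. pose proof H as Hts. destruct H as [_ [[Hrho1 [Hr0 [eta [Heta HY]]]] _]].
  change (fun s => sqrt (1 - rho s ^ 2) / r s) with (Yh rho r) in HY.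
  set (kap := 1 * eta * (1/2 - 3/2 * eta * (0 + 1))).
  assert (HE : lim_0plus (Eh g b rho r) kap).
  { assert (H2 := ts_r2g_lim g b rho r Hg_pos Hg_mono Hts).
    rewrite lim0_iff in *. unfold Eh, kap. repeat lstep. }
  assert (Hk : kap = 0).
  { destruct (Rtotal_order kap 0) as [Hk|[Hk|Hk]]; auto; exfalso.
    - destruct (HE (- kap / 2) ltac:(lra)) as [d1 [Hd1 HE1]].
      destruct (HY (- kap / 16) ltac:(lra)) as [d2 [Hd2 HY2]].
      set (s := Rmin d1 d2 / 2).
      assert (Hs : 0 < s /\ s < d1 /\ s < d2) by
        (unfold s; generalize (Rmin_l d1 d2) (Rmin_r d1 d2) (Rmin_glb_lt d1 d2 0 Hd1 Hd2); lra).
      destruct (MVT_cor2 (Yh rho r) (fun c => Eh g b rho r c / r c) (s/2) s) as [c [Hc1 Hc2]]; [lra| |].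
      + intros c Hc. apply (ts_Yh_deriv g b rho r Hts c). lra.
      + assert (Ha := HY2 s ltac:(lra)). assert (Hb := HY2 (s/2) ltac:(lra)).
        assert (Hcc := HE1 c ltac:(lra)).
        apply Rabs_def2 in Ha, Hb, Hcc.
        assert (Hrc := ts_r_le g b rho r Hts c ltac:(lra)).
        destruct (ts_basic g b rho r Hts c ltac:(lra)) as [_ [_ [Hrc0 _]]].
        set (Dc := Eh g b rho r c / r c) in *.
        assert (HD : Dc * r c = Eh g b rho r c) by (unfold Dc; field; lra).
        assert (Dc < 0) by nra.
        assert (Dc * s < Dc * r c) by nra.
        nra.
    - destruct (HE (kap / 2) ltac:(lra)) as [d1 [Hd1 HE1]].
      destruct (HY (kap / 16) ltac:(lra)) as [d2 [Hd2 HY2]].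
      set (s := Rmin d1 d2 / 2).
      assert (Hs : 0 < s /\ s < d1 /\ s < d2) by
        (unfold s; generalize (Rmin_l d1 d2) (Rmin_r d1 d2) (Rmin_glb_lt d1 d2 0 Hd1 Hd2); lra).
      destruct (MVT_cor2 (Yh rho r) (fun c => Eh g b rho r c / r c) (s/2) s) as [c [Hc1 Hc2]]; [lra| |].
      + intros c Hc. apply (ts_Yh_deriv g b rho r Hts c). lra.
      + assert (Ha := HY2 s ltac:(lra)). assert (Hb := HY2 (s/2) ltac:(lra)).
        assert (Hcc := HE1 c ltac:(lra)).
        apply Rabs_def2 in Ha, Hb, Hcc.
        assert (Hrc := ts_r_le g b rho r Hts c ltac:(lra)).
        destruct (ts_basic g b rho r Hts c ltac:(lra)) as [_ [_ [Hrc0 _]]].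
        set (Dc := Eh g b rho r c / r c) in *.
        assert (HD : Dc * r c = Eh g b rho r c) by (unfold Dc; field; lra).
        assert (Dc > 0) by nra.
        assert (Dc * s > Dc * r c) by nra.
        nra. }
  assert (eta = 1/3) as ->; auto.
  unfold kap in Hk. nra.
Qed.


Definition tau (r : R -> R) (x : R) : R :=
  epsilon (inhabits 0) (fun s => 0 < s /\ r s = x).

Lemma ts_r_cont g b rho r : toy_steady_tip g b rho r -> forall s, 0 < s -> continuity_pt r s.
Proof.
  intros H s Hs. apply derivable_continuous_pt. exists (rho s).
  apply (ts_basic _ _ _ _ H s Hs).
Qed.

Lemma tau_spec g b rho r Rinf : toy_steady_tip g b rho r -> lim_infty r Rinf ->
  forall x, 0 < x < Rinf -> 0 < tau r x /\ r (tau r x) = x.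
Proof.
  intros H HRl x Hx. unfold tau. apply epsilon_spec.
  pose proof H as Hts. destruct H as [_ [[_ [Hr0 _]] _]].
  destruct (Hr0 x ltac:(lra)) as [d [Hd Hds]].
  destruct (HRl (Rinf - x) ltac:(lra)) as [S HS].
  set (s1 := d / 2). set (s2 := Rmax S s1 + 1).
  assert (Hs1 : r s1 < x).
  { specialize (Hds s1 ltac:(unfold s1; lra)). rewrite Rminus_0_r in Hds.
    apply Rabs_def2 in Hds. lra. }
  assert (Hs2 : x < r s2).
  { specialize (HS s2 ltac:(unfold s2; generalize (Rmax_l S s1); lra)).
    apply Rabs_def2 in HS. lra. }
  assert (H12 : s1 < s2) by (unfold s2; generalize (Rmax_r S s1); lra).
  destruct (IVT_interv (fun s => r s - x) s1 s2) as [z [Hz1 Hz2]]; auto; try lra.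
  - intros a Ha. apply continuity_pt_minus. apply (ts_r_cont g b rho r Hts). unfold s1 in *; lra.
    apply continuity_pt_const. intros u v; reflexivity.
  - exists z. split; [unfold s1 in *; lra| lra].
Qed.

Lemma tau_r g b rho r : toy_steady_tip g b rho r -> forall s, 0 < s -> tau r (r s) = s.
Proof.
  intros H s Hs. unfold tau.
  assert (Hsp : 0 < epsilon (inhabits 0) (fun t => 0 < t /\ r t = r s) /\
               r (epsilon (inhabits 0) (fun t => 0 < t /\ r t = r s)) = r s)
    by (apply epsilon_spec; exists s; auto).
  set (t := epsilon (inhabits 0) (fun t => 0 < t /\ r t = r s)) in *.
  destruct Hsp as [Ht Hrt].
  destruct (Rtotal_order t s) as [Hlt|[Heq|Hgt]]; auto.
  - assert (Hi := ts_r_incr g b rho r H t s ltac:(lra)). lra.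
  - assert (Hi := ts_r_incr g b rho r H s t ltac:(lra)). lra.
Qed.

Lemma tau_incr g b rho r Rinf : toy_steady_tip g b rho r -> lim_infty r Rinf ->
  forall x y, 0 < x -> x < y -> y < Rinf -> tau r x < tau r y.
Proof.
  intros H HRl x y Hx Hxy HyR.
  destruct (tau_spec g b rho r Rinf H HRl x ltac:(lra)) as [Hx1 Hx2].
  destruct (tau_spec g b rho r Rinf H HRl y ltac:(lra)) as [Hy1 Hy2].
  destruct (Rtotal_order (tau r x) (tau r y)) as [|[Heq|Hgt]]; auto.
  - rewrite Heq in Hx2. lra.
  - assert (Hi := ts_r_incr g b rho r H _ _ (conj Hy1 Hgt)). lra.
Qed.

Lemma tau_cont g b rho r Rinf : toy_steady_tip g b rho r -> lim_infty r Rinf ->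
  (forall s, 0 < s -> r s < Rinf) ->
  forall x, 0 < x < Rinf -> continuity_pt (tau r) x.
Proof.
  intros H HRl HRb x Hx. destruct (tau_spec g b rho r Rinf H HRl x Hx) as [Hs Hrs].
  set (s := tau r x) in *.
  unfold continuity_pt, continue_in, limit1_in, limit_in. simpl. unfold R_dist.
  intros eps Heps.
  set (s1 := s - Rmin eps s / 2). set (s2 := s + eps / 2).
  assert (Hm1 := Rmin_l eps s). assert (Hm2 := Rmin_r eps s).
  assert (Hm3 : 0 < Rmin eps s) by (apply Rmin_glb_lt; lra).
  assert (Hs1 : 0 < s1 < s) by (unfold s1; lra).
  assert (Hr1 := ts_r_incr g b rho r H s1 s Hs1).
  assert (Hr2 := ts_r_incr g b rho r H s s2 ltac:(unfold s2; lra)).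
  assert (Hr10 := proj1 (proj2 (proj2 (ts_basic g b rho r H s1 (proj1 Hs1))))).
  assert (HR2 := HRb s2 ltac:(unfold s2; lra)).
  exists (Rmin (x - r s1) (r s2 - x)). split.
  - apply Rmin_glb_lt; lra.
  - intros y [_ Hy]. assert (Hy1 := Rmin_l (x - r s1) (r s2 - x)).
    assert (Hy2 := Rmin_r (x - r s1) (r s2 - x)).
    apply Rabs_def2 in Hy.
    assert (Hya : r s1 < y) by lra. assert (Hyb : y < r s2) by lra.
    assert (HyR : y < Rinf) by (eapply Rlt_trans; eassumption). assert (Hy0 : 0 < y) by lra.
    assert (T1 := tau_incr g b rho r Rinf H HRl (r s1) y Hr10 Hya HyR).
    assert (T2 := tau_incr g b rho r Rinf H HRl y (r s2) Hy0 Hyb HR2).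
    rewrite (tau_r g b rho r H s1 (proj1 Hs1)) in T1.
    rewrite (tau_r g b rho r H s2 ltac:(unfold s2; lra)) in T2.
    change (tau r x) with s. apply Rabs_def1; unfold s1, s2 in *; lra.
Qed.

Lemma tau_deriv g b rho r Rinf : toy_steady_tip g b rho r -> lim_infty r Rinf ->
  (forall s, 0 < s -> r s < Rinf) ->
  forall x, 0 < x < Rinf -> derivable_pt_lim (tau r) x (1 / rho (tau r x)).
Proof.
  intros H HRl HRb x Hx.
  set (lb := x / 2). set (ub := (x + Rinf) / 2).
  assert (Hlb := tau_spec g b rho r Rinf H HRl lb ltac:(unfold lb; lra)).
  assert (Hub := tau_spec g b rho r Rinf H HRl ub ltac:(unfold ub; lra)).
  assert (Prf : forall a, tau r lb <= a <= tau r ub -> derivable_pt r a).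
  { intros a Ha. exists (rho a). apply (ts_basic g b rho r H a). lra. }
  assert (Prg := tau_cont g b rho r Rinf H HRl HRb x Hx).
  assert (Hi1 := tau_incr g b rho r Rinf H HRl lb x ltac:(unfold lb; lra) ltac:(unfold lb; lra) ltac:(lra)).
  assert (Hi2 := tau_incr g b rho r Rinf H HRl x ub ltac:(lra) ltac:(unfold ub; lra) ltac:(unfold ub; lra)).
  assert (Hincr : tau r lb <= tau r x <= tau r ub) by lra.
  assert (Hcomp : forall y, lb <= y <= ub -> comp r (tau r) y = id y).
  { intros y Hy. unfold comp, id. apply (tau_spec g b rho r Rinf H HRl y). unfold lb, ub in *; lra. }
  assert (Hx0 := tau_spec g b rho r Rinf H HRl x Hx).
  assert (E : derive_pt r (tau r x) (Prf (tau r x) Hincr) = rho (tau r x)).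
  { apply derive_pt_eq_0. apply (ts_basic g b rho r H). lra. }
  assert (Hp := ts_basic g b rho r H (tau r x) (proj1 Hx0)).
  assert (Hd := derivable_pt_lim_recip_interv r (tau r) lb ub x Prf Prg
                 ltac:(unfold lb, ub; lra) ltac:(unfold lb, ub; lra) Hincr Hcomp).
  rewrite E in Hd. apply Hd. lra.
Qed.

Definition Px (rho r : R -> R) x := rho (tau r x).
Definition Yx (rho r : R -> R) x := Yh rho r (tau r x).
Definition Psi (g : R -> R) b x P Y := Y * (1/2 - 3/2 * Y * (b * x ^ 2 * g (x ^ 2) + P)) / x.

Lemma Yx_deriv g b rho r Rinf : toy_steady_tip g b rho r -> lim_infty r Rinf ->
  (forall s, 0 < s -> r s < Rinf) ->
  forall x, 0 < x < Rinf -> derivable_pt_lim (Yx rho r) x (Psi g b x (Px rho r x) (Yx rho r x)).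
Proof.
  intros H HRl HRb x Hx.
  assert (Hd1 := tau_deriv g b rho r Rinf H HRl HRb x Hx).
  destruct (tau_spec g b rho r Rinf H HRl x Hx) as [Ht Hrt].
  assert (Hd2 := ts_Yh_deriv g b rho r H (tau r x) Ht).
  assert (Hd := derivable_pt_lim_comp _ _ _ _ _ Hd1 Hd2).
  destruct (ts_basic g b rho r H (tau r x) Ht) as [Hp _].
  unfold comp in Hd. unfold Yx.
  replace (Psi g b x (Px rho r x) (Yh rho r (tau r x))) with
    (rho (tau r x) * Yh rho r (tau r x) *
      (1 / 2 - 3 / 2 * Yh rho r (tau r x) * (b * r (tau r x) ^ 2 * g (r (tau r x) ^ 2) + rho (tau r x))) /
      r (tau r x) * (1 / rho (tau r x))).
  - exact Hd.
  - unfold Psi, Px. rewrite Hrt. field. lra.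
Qed.

Lemma Px_Yx g b rho r Rinf : toy_steady_tip g b rho r -> lim_infty r Rinf ->
  forall x, 0 < x < Rinf ->
  0 < Px rho r x < 1 /\ 0 < Yx rho r x /\ Px rho r x ^ 2 + x ^ 2 * Yx rho r x ^ 2 = 1.
Proof.
  intros H HRl x Hx.
  destruct (tau_spec g b rho r Rinf H HRl x Hx) as [Ht Hrt].
  destruct (ts_basic g b rho r H (tau r x) Ht) as [Hp1 [Hp2 _]].
  unfold Px, Yx, Yh. rewrite Hrt.
  assert (Hq : 0 < 1 - rho (tau r x) ^ 2) by nra.
  assert (Hw := sqrt_sqrt _ (Rlt_le _ _ Hq)). assert (Hw0 := sqrt_lt_R0 _ Hq).
  repeat split; try lra.
  - apply Rdiv_lt_0_compat; lra.
  - set (w := sqrt (1 - rho (tau r x) ^ 2)) in *. replace ((w / x) ^ 2) with (w * w / (x * x)) by (field; lra). rewrite Hw. field. lra.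
Qed.


Lemma Yx_lim0 g b rho r Rinf
  (Hg_pos : forall v, 0 < v -> 0 < g v)
  (Hg_mono : forall v, 0 < v -> exists l, derivable_pt_lim g v l /\ 0 <= l) :
  toy_steady_tip g b rho r -> lim_infty r Rinf ->
  (forall s, 0 < s -> r s < Rinf) ->
  forall eps, 0 < eps -> exists d, 0 < d /\ d < Rinf /\
    forall x, 0 < x < d -> Rabs (Yx rho r x - 1/3) < eps.
Proof.
  intros H HRl HRb eps Heps.
  destruct (ts_Yh_lim g b rho r Hg_pos Hg_mono H eps Heps) as [d [Hd Hds]].
  destruct (ts_basic g b rho r H (d/2) ltac:(lra)) as [_ [_ [Hr _]]].
  exists (r (d/2)). split; [lra| split; [apply HRb; lra|]].
  intros x Hx. unfold Yx. apply Hds.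
  assert (HxR : x < Rinf) by (generalize (HRb (d/2) ltac:(lra)); lra).
  destruct (tau_spec g b rho r Rinf H HRl x ltac:(lra)) as [Ht _].
  assert (T := tau_incr g b rho r Rinf H HRl x (r (d/2)) ltac:(lra) ltac:(lra) ltac:(apply HRb; lra)).
  rewrite (tau_r g b rho r H (d/2)) in T by lra. lra.
Qed.

Lemma Px_decr g b rho r Rinf : toy_steady_tip g b rho r -> lim_infty r Rinf ->
  forall x y, 0 < x -> x < y -> y < Rinf -> Px rho r y < Px rho r x.
Proof.
  intros H HRl x y Hx Hxy Hy.
  assert (T := tau_incr g b rho r Rinf H HRl x y Hx Hxy Hy).
  destruct (tau_spec g b rho r Rinf H HRl x ltac:(lra)) as [Ht _].
  unfold Px. apply (ts_rho_decr g b rho r H). lra.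
Qed.

Lemma Px_small g b rho r Rinf : toy_steady_tip g b rho r ->
  (forall s, 0 < s -> r s < Rinf) ->
  forall eps, 0 < eps -> exists x, 0 < x < Rinf /\ Px rho r x < eps.
Proof.
  intros H HRb eps Heps. pose proof H as Hts.
  destruct H as [_ [_ [_ [_ [Hrho0 _]]]]].
  destruct (Hrho0 eps Heps) as [S HS].
  set (s := Rmax S 0 + 1).
  assert (Hs : S < s /\ 0 < s) by (unfold s; generalize (Rmax_l S 0) (Rmax_r S 0); lra).
  exists (r s). destruct (ts_basic g b rho r Hts s (proj2 Hs)) as [_ [_ [Hr _]]].
  split; [split; auto; apply HRb; lra|].
  unfold Px. rewrite (tau_r g b rho r Hts s) by lra.
  specialize (HS s (proj1 Hs)). apply Rabs_def2 in HS. lra.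
Qed.

Lemma cont_ball f x : continuity_pt f x -> forall eps, 0 < eps ->
  exists d, 0 < d /\ forall y, Rabs (y - x) < d -> Rabs (f y - f x) < eps.
Proof.
  intros Hc eps Heps. unfold continuity_pt, continue_in, limit1_in, limit_in in Hc.
  destruct (Hc eps Heps) as [d [Hd Hds]]. exists d. split; auto.
  intros y Hy. destruct (Req_dec y x) as [->|Hne].
  - rewrite Rminus_diag, Rabs_R0; auto.
  - apply (Hds y). split; [split; auto|exact Hy]. exact I.
Qed.

Lemma no_down_cross (V DV : R -> R) a b : a < b ->
  (forall x, a <= x <= b -> derivable_pt_lim V x (DV x)) ->
  0 < V b ->
  (forall x, a <= x <= b -> V x = 0 -> DV x < 0) ->
  0 < V a.
Proof.
  intros Hab HD Hb HZ. destruct (Rlt_or_le 0 (V a)) as [|Ha]; auto. exfalso.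
  set (E := fun x => a <= x <= b /\ V x <= 0).
  assert (Hbd : bound E) by (exists b; intros x [Hx _]; lra).
  assert (Hne : exists x, E x) by (exists a; split; [lra|auto]).
  destruct (completeness E Hbd Hne) as [m [Hub Hlub]].
  assert (Ham : a <= m) by (apply Hub; split; [lra|auto]).
  assert (Hmb : m <= b) by (apply Hlub; intros x [Hx _]; lra).
  assert (Hc : continuity_pt V m).
  { apply derivable_continuous_pt. exists (DV m). apply HD. lra. }
  assert (Hm0 : V m <= 0).
  { destruct (Rle_or_lt (V m) 0) as [|Hpos]; auto. exfalso.
    destruct (cont_ball V m Hc (V m) Hpos) as [d [Hd Hds]].
    assert (m <= m - d); [|lra].
    apply Hlub. intros x [Hx Hvx]. assert (x <= m) by (apply Hub; split; auto).
    destruct (Rle_or_lt x (m - d)) as [|Hlt]; auto.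
    assert (Rabs (x - m) < d) by (apply Rabs_def1; lra).
    specialize (Hds x H0). apply Rabs_def2 in Hds. lra. }
  assert (Hmb' : m < b) by (destruct Hmb; auto; subst; lra).
  destruct Hm0 as [Hneg|Hz].
  - destruct (cont_ball V m Hc (- V m) ltac:(lra)) as [d [Hd Hds]].
    set (y := m + Rmin d (b - m) / 2).
    assert (Hm1 := Rmin_l d (b - m)). assert (Hm2 := Rmin_r d (b - m)).
    assert (Hm3 : 0 < Rmin d (b - m)) by (apply Rmin_glb_lt; lra).
    assert (Hy : Rabs (y - m) < d) by (apply Rabs_def1; unfold y; lra).
    specialize (Hds y Hy). apply Rabs_def2 in Hds.
    assert (y <= m) by (apply Hub; split; [unfold y; lra| lra]).
    unfold y in *; lra.
  - assert (Hl := HZ m ltac:(lra) Hz).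
    destruct (HD m ltac:(lra) (- DV m / 2) ltac:(lra)) as [d Hds].
    set (h := Rmin d (b - m) / 2).
    assert (Hm1 := Rmin_l d (b - m)). assert (Hm2 := Rmin_r d (b - m)).
    assert (Hm3 : 0 < Rmin d (b - m)) by (apply Rmin_glb_lt; [apply cond_pos|lra]).
    assert (Hh : 0 < h) by (unfold h; lra).
    specialize (Hds h ltac:(lra) ltac:(rewrite Rabs_right; unfold h; lra)).
    rewrite Hz, Rminus_0_r in Hds. apply Rabs_def2 in Hds.
    assert (Hq : V (m + h) / h < 0) by lra.
    assert (Hv : V (m + h) < 0).
    { replace (V (m + h)) with (V (m + h) / h * h) by (field; lra). nra. }
    assert (m + h <= m) by (apply Hub; split; [unfold h in *; lra| lra]).
    lra.
Qed.

Lemma psi_cross (g : R -> R) b1 b2 x P Y : 0 < b1 < b2 -> 0 < x -> 0 < g (x ^ 2) -> 0 < Y ->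
  Psi g b2 x P Y - Psi g b1 x P Y < 0.
Proof.
  intros Hb Hx Hg HY. unfold Psi.
  replace (Y * (1 / 2 - 3 / 2 * Y * (b2 * x ^ 2 * g (x ^ 2) + P)) / x -
           Y * (1 / 2 - 3 / 2 * Y * (b1 * x ^ 2 * g (x ^ 2) + P)) / x)
    with (- (3/2) * (Y * Y) * (b2 - b1) * x * g (x ^ 2)) by (field; lra).
  assert (0 < Y * Y) by nra. assert (0 < (Y * Y) * (b2 - b1)) by nra.
  assert (0 < (Y * Y) * (b2 - b1) * x) by nra.
  assert (0 < (Y * Y) * (b2 - b1) * x * g (x^2)) by nra. lra.
Qed.

Lemma psi_mono (g : R -> R) b1 b2 x P1 P2 Y1 Y2 :
  0 < b1 < b2 -> 0 < x <= 1/2 -> 0 < g (x ^ 2) ->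
  3/10 <= Y1 -> Y1 < Y2 -> Y2 <= 2/5 -> 0 < P1 -> 0 < P2 ->
  P1 ^ 2 + x ^ 2 * Y1 ^ 2 = 1 -> P2 ^ 2 + x ^ 2 * Y2 ^ 2 = 1 ->
  Psi g b2 x P2 Y2 < Psi g b1 x P1 Y1.
Proof.
  intros Hb Hx Hg HY1 HY12 HY2 HP1 HP2 E1 E2. unfold Psi.
  set (G := g (x ^ 2)) in *.
  assert (Hx2 : x ^ 2 <= 1/4) by nra.
  assert (Hx20 : 0 < x ^ 2) by nra.
  assert (HP2b : 97/100 <= P2).
  { assert (x ^ 2 * Y2 ^ 2 <= 1/4 * (4/25)).
    { apply Rmult_le_compat; try nra. }
    nra. }
  assert (HD : (P1 - P2) * (P1 + P2) = x ^ 2 * (Y2 ^ 2 - Y1 ^ 2)) by nra.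
  assert (HY : 0 < Y2 ^ 2 - Y1 ^ 2) by nra.
  assert (HP12 : 0 <= P1 - P2) by nra.
  assert (HP12b : (P1 - P2) * (194/100) <= 1/4 * (Y2 ^ 2 - Y1 ^ 2)).
  { apply Rle_trans with ((P1 - P2) * (P1 + P2)). apply Rmult_le_compat_l; lra.
    rewrite HD. apply Rmult_le_compat_r; lra. }
  assert (HK : Y2 ^ 2 * P2 - Y1 ^ 2 * P1 >= 94/100 * (Y2 ^ 2 - Y1 ^ 2)).
  { replace (Y2 ^ 2 * P2 - Y1 ^ 2 * P1) with ((Y2 ^ 2 - Y1 ^ 2) * P2 - Y1 ^ 2 * (P1 - P2)) by ring.
    assert (Y1 ^ 2 <= 4/25) by nra.
    assert (Y1 ^ 2 * (P1 - P2) <= 4/25 * (P1 - P2)) by (apply Rmult_le_compat_r; lra).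
    assert ((Y2 ^ 2 - Y1 ^ 2) * P2 >= (Y2 ^ 2 - Y1 ^ 2) * (97/100)) by (apply Rle_ge, Rmult_le_compat_l; lra).
    lra. }
  assert (HK2 : Y2 ^ 2 - Y1 ^ 2 >= 6/10 * (Y2 - Y1)) by nra.
  assert (HC : b1 * x ^ 2 * G * Y1 ^ 2 <= b2 * x ^ 2 * G * Y2 ^ 2).
  { assert (0 < x ^ 2 * G) by nra.
    assert (b1 * Y1 ^ 2 <= b2 * Y2 ^ 2) by nra.
    replace (b1 * x ^ 2 * G * Y1 ^ 2) with ((x ^ 2 * G) * (b1 * Y1 ^ 2)) by ring.
    replace (b2 * x ^ 2 * G * Y2 ^ 2) with ((x ^ 2 * G) * (b2 * Y2 ^ 2)) by ring.
    apply Rmult_le_compat_l; lra. }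
  unfold Rdiv. apply Rmult_lt_compat_r; [apply Rinv_0_lt_compat; lra|].
  replace (Y2 * (1 * / 2 - 3 * / 2 * Y2 * (b2 * x ^ 2 * G + P2))) with
    (Y2 / 2 - 3/2 * (b2 * x ^ 2 * G * Y2 ^ 2) - 3/2 * (Y2 ^ 2 * P2)) by field.
  replace (Y1 * (1 * / 2 - 3 * / 2 * Y1 * (b1 * x ^ 2 * G + P1))) with
    (Y1 / 2 - 3/2 * (b1 * x ^ 2 * G * Y1 ^ 2) - 3/2 * (Y1 ^ 2 * P1)) by field.
  lra.
Qed.


Lemma PY_eq P1 P2 Y1 Y2 x : 0 < x -> 0 < P1 -> 0 < P2 -> 0 < Y1 -> 0 < Y2 ->
  P1 ^ 2 + x ^ 2 * Y1 ^ 2 = 1 -> P2 ^ 2 + x ^ 2 * Y2 ^ 2 = 1 ->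
  (P2 < P1 -> Y1 < Y2) /\ (Y1 = Y2 -> P1 = P2).
Proof.
  intros Hx HP1 HP2 HY1 HY2 E1 E2. split.
  - intros HP. assert (x ^ 2 * Y1 ^ 2 < x ^ 2 * Y2 ^ 2) by nra.
    assert (Y1 ^ 2 < Y2 ^ 2).
    { apply (Rmult_lt_reg_l (x ^ 2)); nra. }
    nra.
  - intros <-. nra.
Qed.

Lemma uniq g
  (Hg_pos : forall v, 0 < v -> 0 < g v)
  (Hg_mono : forall v, 0 < v -> exists l, derivable_pt_lim g v l /\ 0 <= l) :
  forall b1 b2, 0 < b1 < b2 -> has_toy_steady g b1 -> has_toy_steady g b2 -> False.
Proof.
  intros b1 b2 Hb [rho1 [r1 H1]] [rho2 [r2 H2]].
  destruct (ts_R g b1 rho1 r1 H1) as [R1 [HR1 [HRl1 HRb1]]].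
  destruct (ts_R g b2 rho2 r2 H2) as [R2 [HR2 [HRl2 HRb2]]].
  assert (Eq1 := ts_equil g b1 rho1 r1 Hg_mono H1 R1 HR1 HRl1).
  assert (Eq2 := ts_equil g b2 rho2 r2 Hg_mono H2 R2 HR2 HRl2).
  assert (HR12 : R2 < R1).
  { destruct (Rlt_or_le R2 R1) as [|Hle]; auto. exfalso.
    assert (G1 := Hg_pos (R1 ^ 2) ltac:(nra)).
    destruct Hle as [Hlt| <-].
    - assert (W := wg_strict g Hg_pos Hg_mono R1 R2 (conj HR1 Hlt)).
      assert (0 < R1 * g (R1 ^ 2)) by nra. nra.
    - nra. }
  set (Y1 := Yx rho1 r1). set (Y2 := Yx rho2 r2).
  set (P1 := Px rho1 r1). set (P2 := Px rho2 r2).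
  set (V := fun x => Y2 x - Y1 x).
  set (DV := fun x => Psi g b2 x (P2 x) (Y2 x) - Psi g b1 x (P1 x) (Y1 x)).
  assert (Hinfo : forall x, 0 < x < R2 ->
     (0 < P1 x < 1 /\ 0 < Y1 x /\ P1 x ^ 2 + x ^ 2 * Y1 x ^ 2 = 1) /\
     (0 < P2 x < 1 /\ 0 < Y2 x /\ P2 x ^ 2 + x ^ 2 * Y2 x ^ 2 = 1)).
  { intros x Hx. split.
    - apply (Px_Yx g b1 rho1 r1 R1 H1 HRl1). lra.
    - apply (Px_Yx g b2 rho2 r2 R2 H2 HRl2). lra. }
  assert (HDV : forall x, 0 < x < R2 -> derivable_pt_lim V x (DV x)).
  { intros x Hx. unfold V, DV. apply derivable_pt_lim_minus.
    - apply (Yx_deriv g b2 rho2 r2 R2 H2 HRl2 HRb2). lra.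
    - apply (Yx_deriv g b1 rho1 r1 R1 H1 HRl1 HRb1). lra. }
  destruct (Px_Yx g b1 rho1 r1 R1 H1 HRl1 R2 ltac:(lra)) as [[Hp0 _] _].
  destruct (Px_small g b2 rho2 r2 R2 H2 HRb2 (P1 R2) Hp0) as [x0 [Hx0 Hx0p]].
  assert (HV0 : 0 < V x0).
  { assert (Hx0a : 0 < x0) by lra. assert (Hx0b : x0 < R2) by lra. assert (Hd := Px_decr g b1 rho1 r1 R1 H1 HRl1 x0 R2 Hx0a Hx0b HR12).
    destruct (Hinfo x0 Hx0) as [[A1 [A2 A3]] [B1 [B2 B3]]].
    destruct (PY_eq (P1 x0) (P2 x0) (Y1 x0) (Y2 x0) x0 ltac:(lra) ltac:(lra) ltac:(lra)
       A2 B2 A3 B3) as [Hc _].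
    unfold V. fold P1 in Hd. fold P2 in Hx0p. assert (Y1 x0 < Y2 x0) by (apply Hc; lra). lra. }
  assert (Hpos : forall x, 0 < x <= x0 -> 0 < V x).
  { intros x Hx. destruct (Req_dec x x0) as [->|Hne]; auto.
    apply (no_down_cross V DV x x0); try lra.
    - intros y Hy. apply HDV. lra.
    - intros y Hy Hz. destruct (Hinfo y ltac:(lra)) as [[A1 [A2 A3]] [B1 [B2 B3]]].
      destruct (PY_eq (P1 y) (P2 y) (Y1 y) (Y2 y) y ltac:(lra) ltac:(lra) ltac:(lra)
         A2 B2 A3 B3) as [_ Hc].
      assert (Hy12 : Y1 y = Y2 y) by (unfold V in Hz; lra).
      unfold DV. rewrite <- (Hc Hy12), <- Hy12.
      apply psi_cross; try lra. apply Hg_pos. nra. }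
  destruct (Yx_lim0 g b1 rho1 r1 R1 Hg_pos Hg_mono H1 HRl1 HRb1 (1/30) ltac:(lra)) as [d1 [Hd1 [_ Hd1s]]].
  destruct (Yx_lim0 g b2 rho2 r2 R2 Hg_pos Hg_mono H2 HRl2 HRb2 (1/30) ltac:(lra)) as [d2 [Hd2 [_ Hd2s]]].
  set (m := Rmin (Rmin d1 d2) (Rmin x0 (1/2))).
  assert (Hm : 0 < m /\ m <= d1 /\ m <= d2 /\ m <= x0 /\ m <= 1/2).
  { unfold m. generalize (Rmin_l (Rmin d1 d2) (Rmin x0 (1/2))) (Rmin_r (Rmin d1 d2) (Rmin x0 (1/2)))
      (Rmin_l d1 d2) (Rmin_r d1 d2) (Rmin_l x0 (1/2)) (Rmin_r x0 (1/2)).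
    assert (0 < Rmin (Rmin d1 d2) (Rmin x0 (1/2))).
    { apply Rmin_glb_lt; apply Rmin_glb_lt; lra. }
    lra. }
  set (x2 := m / 2).
  assert (HDneg : forall y, 0 < y <= x2 -> DV y < 0).
  { intros y Hy. destruct (Hinfo y ltac:(unfold x2 in *; lra)) as [[A1 [A2 A3]] [B1 [B2 B3]]].
    assert (Hv := Hpos y ltac:(unfold x2 in *; lra)).
    assert (T1 := Hd1s y ltac:(unfold x2 in *; lra)).
    assert (T2 := Hd2s y ltac:(unfold x2 in *; lra)).
    apply Rabs_def2 in T1, T2. fold Y1 in T1. fold Y2 in T2. unfold V in Hv. unfold DV.
    assert (Psi g b2 y (P2 y) (Y2 y) < Psi g b1 y (P1 y) (Y1 y)); [|lra].
    apply psi_mono; try lra; try (unfold x2 in *; lra); try (apply Hg_pos; nra). }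
  assert (Hx2 : 0 < V x2) by (apply Hpos; unfold x2; lra).
  destruct (Yx_lim0 g b1 rho1 r1 R1 Hg_pos Hg_mono H1 HRl1 HRb1 (V x2 / 2) ltac:(lra)) as [d3 [Hd3 [_ Hd3s]]].
  destruct (Yx_lim0 g b2 rho2 r2 R2 Hg_pos Hg_mono H2 HRl2 HRb2 (V x2 / 2) ltac:(lra)) as [d4 [Hd4 [_ Hd4s]]].
  set (y := Rmin (Rmin d3 d4) x2 / 2).
  assert (Hy : 0 < y /\ y < d3 /\ y < d4 /\ y < x2).
  { unfold y. generalize (Rmin_l (Rmin d3 d4) x2) (Rmin_r (Rmin d3 d4) x2)
      (Rmin_l d3 d4) (Rmin_r d3 d4).
    assert (0 < Rmin (Rmin d3 d4) x2).
    { apply Rmin_glb_lt; [apply Rmin_glb_lt|unfold x2]; lra. }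
    lra. }
  assert (T3 := Hd3s y ltac:(lra)). assert (T4 := Hd4s y ltac:(lra)).
  apply Rabs_def2 in T3, T4.
  destruct (MVT_cor2 V DV y x2) as [c [Hc1 Hc2]]; [lra| |].
  - intros c Hc. apply HDV. unfold x2 in *; lra.
  - assert (HDc := HDneg c ltac:(lra)).
    assert (DV c * (x2 - y) < 0) by (apply Rmult_neg_pos; lra).
    unfold V in Hc1, T3, T4. fold Y1 in T3. fold Y2 in T4. lra.
Qed.


Theorem theorem3p2 (g : R -> R)
  (Hg_an : analytic g)
  (Hg_pos : forall v, 0 < v -> 0 < g v)
  (Hg_mono : forall v, 0 < v -> exists l, derivable_pt_lim g v l /\ 0 <= l)
  (Hg_conv : exists d1 : R -> R,
      (forall v, derivable_pt_lim (fun w => w ^ 2 * g (w ^ 2)) v (d1 v)) /\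
      (forall v, 0 < v -> exists l, derivable_pt_lim d1 v l /\ 0 < l))
  (Hg_lim : lim_infty_infty (fun v => v * g (v ^ 2))) :
  (* closed in R_{>0} *)
  (forall beta, 0 < beta ->
     (forall eps, 0 < eps -> exists b, 0 < b /\ Rabs (b - beta) < eps /\ has_toy_steady g b) ->
     has_toy_steady g beta) /\
  (* empty interior *)
  (forall beta eps, 0 < beta -> 0 < eps ->
     exists b, 0 < b /\ Rabs (b - beta) < eps /\ ~ has_toy_steady g b).
Proof.
  assert (U : forall b1 b2, 0 < b1 -> 0 < b2 -> b1 <> b2 ->
             has_toy_steady g b1 -> has_toy_steady g b2 -> False).
  { intros b1 b2 H1 H2 Hne S1 S2. destruct (Rtotal_order b1 b2) as [Hl|[He|Hl]].
    - exact (uniq g Hg_pos Hg_mono b1 b2 (conj H1 Hl) S1 S2).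
    - contradiction.
    - exact (uniq g Hg_pos Hg_mono b2 b1 (conj H2 Hl) S2 S1). }
  split.
  - intros beta Hb Hcl. destruct (classic (has_toy_steady g beta)) as [|Hn]; auto. exfalso.
    destruct (Hcl 1 ltac:(lra)) as [b1 [Hb1 [Hd1 S1]]].
    assert (Hne : b1 <> beta) by (intro; subst; contradiction).
    assert (Hpos : 0 < Rabs (b1 - beta)) by (apply Rabs_pos_lt; lra).
    destruct (Hcl _ Hpos) as [b2 [Hb2 [Hd2 S2]]].
    apply (U b1 b2 Hb1 Hb2); auto. intro; subst; lra.
  - intros beta eps Hb He.
    destruct (classic (has_toy_steady g (beta + eps / 3))) as [S1|N1].
    + exists (beta + 2 * eps / 3). repeat split; try lra.
      * rewrite Rabs_right; lra.
      * intro S2. apply (U (beta + eps/3) (beta + 2 * eps / 3)); auto; lra.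
    + exists (beta + eps / 3). repeat split; auto; try lra. rewrite Rabs_right; lra.
Qed.
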